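(* There exists $n_0$ such that for all $n\ge n_0$ the following holds. Let $\mathcal{H} = (X,\mathcal{F})$ be a hypergraph with $|X|=n$ and $|\mathcal{F}|\leq n^{\log(n)}$ such that every hyperedge contains at least $\log^3(n)$ vertices. Then in the Waiter-Client game on $\mathcal{H}$, Waiter has a strategy such that at the end of the game the set $C$ of Client's elements satisfies $|C\cap f| \geq \frac{|f|}{100}$ for every $f\in \mathcal{F}$.
   Context: Waiter-Client game on a hypergraph $(X,\mathcal{F})$: in each round Waiter offers Client two previously unclaimed elements of $X$; Client keeps one and the other goes to Waiter; if in the final round only one unclaimed element remains, it goes to Waiter. The game ends when all elements are claimed. *)

(* Defs.v *)
From mathcomp Require Import all_boot.
From Stdlib Require Import Reals.
Set Implicit Arguments. Unset Strict Implicit. Unset Printing Implicit Defensive.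

(* State: U = set of still-unclaimed elements, C = Client's elements so far.
   [waiter_wins P U C] : from this state, Waiter has a strategy guaranteeing
   that Client's final set satisfies P.
   - If at most one element is unclaimed, the game ends (a single leftover
     element goes to Waiter, so C is Client's final set).
   - Otherwise Waiter offers two distinct unclaimed elements x, y, and must
     win whichever of them Client keeps (the other goes to Waiter). *)
Inductive waiter_wins (T : finType) (P : {set T} -> Prop)
  : {set T} -> {set T} -> Prop :=
| ww_end (U C : {set T}) :
    #|U| <= 1 -> P C -> waiter_wins P U C
| ww_step (U C : {set T}) (x y : T) :
    x \in U -> y \in U -> x != y ->
    waiter_wins P (U :\ x :\ y) (x |: C) ->
    waiter_wins P (U :\ x :\ y) (y |: C) ->
    waiter_wins P U C.

Definition waiter_strategy (T : finType) (P : {set T} -> Prop) : Prop :=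
  waiter_wins P [set: T] set0.

(* Main.v *)
Require Import Defs.
From mathcomp Require Import all_boot.
From Stdlib Require Import Reals.
From mathcomp Require Import zify.
From Stdlib Require Import Classical Lra Lia Psatz.
From mathcomp Require Import ssrnat.
Set Implicit Arguments. Unset Strict Implicit. Unset Printing Implicit Defensive.

Section Game.
Variable T : finType.

Definition hw (f U C : {set T}) (z : T) : nat :=
  if z \in f then (if z \in C then 1 else if z \in U then 2 else 3) else 2.
Definition om f U C := \prod_(z : T) hw f U C z.
Definition Psi (F : {set {set T}}) U C := \sum_(f in F) om f U C.
Definition deg (F : {set {set T}}) U C z := \sum_(f in F) (z \in f) * om f U C.

Lemma om_step (f U C : {set T}) (x y : T) : x \in U -> y \in U -> x != y ->
  (forall z, z \in U -> z \notin C) ->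
  4 * om f (U :\ x :\ y) (x |: C) + 2 * ((x \in f) * om f U C)
   <= 4 * om f U C + 2 * ((y \in f) * om f U C).
Proof.
move=> xU yU xy dis.
have yx : y != x by rewrite eq_sym.
have split2 : forall h : T -> nat, \prod_(z : T) h z =
    h x * (h y * \prod_(i | (i != x) && (i != y)) h i).
  move=> h; rewrite (bigD1 x) //= (bigD1 y) //=.
rewrite /om !split2.
set R := \prod_(i | (i != x) && (i != y)) hw f (U :\ x :\ y) (x |: C) i.
have -> : R = \prod_(i | (i != x) && (i != y)) hw f U C i.
  apply: eq_bigr => z /andP [zx zy]; rewrite /hw !inE (negbTE zx) (negbTE zy) /=.
  by [].
set R' := \prod_(i | (i != x) && (i != y)) hw f U C i.
have hx : hw f U C x = 2 by rewrite /hw (negbTE (dis x xU)) xU; case: (x \in f).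
have hy : hw f U C y = 2 by rewrite /hw (negbTE (dis y yU)) yU; case: (y \in f).
have hx' : hw f (U :\ x :\ y) (x |: C) x = if x \in f then 1 else 2.
  by rewrite /hw !inE eqxx.
have hy' : hw f (U :\ x :\ y) (x |: C) y = if y \in f then 3 else 2.
  by rewrite /hw !inE eqxx (negbTE yx) (negbTE (dis y yU)).
rewrite hx hy hx' hy'.
case: (x \in f); case: (y \in f) => /=; lia.
Qed.

Lemma Psi_step (F : {set {set T}}) (U C : {set T}) (x y : T) : x \in U -> y \in U -> x != y ->
  (forall z, z \in U -> z \notin C) ->
  4 * Psi F (U :\ x :\ y) (x |: C) + 2 * deg F U C x
   <= 4 * Psi F U C + 2 * deg F U C y.
Proof.
move=> xU yU xy dis.
rewrite /Psi /deg !big_distrr /= -!big_split /=.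
by apply: leq_sum => f _; apply: om_step.
Qed.

Lemma deg_le (F : {set {set T}}) (U C : {set T}) (z : T) : deg F U C z <= Psi F U C.
Proof.
apply: leq_sum => f _; case: (z \in f) => /=; lia.
Qed.

Lemma gap (d : T -> nat) M : forall m (S : {set T}), #|S| = m.+1 ->
  (forall x y, x \in S -> y \in S -> x != y -> d y <= d x -> M < d x - d y) ->
  exists z w, [/\ z \in S, w \in S & d w + m * M.+1 <= d z].
Proof.
elim=> [|m IH] S cS H.
  have [z Sz] : exists z, z \in S.
    by apply/set0Pn; rewrite -card_gt0 cS.
  by exists z, z; rewrite mul0n addn0.
have [z0 Sz0] : exists z, z \in S.
  by apply/set0Pn; rewrite -card_gt0 cS.
case: (arg_maxnP d Sz0) => xm Sxm0 Hmax.
have Sxm : xm \in S := Sxm0.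
have cS' : #|S :\ xm| = m.+1.
  by move: cS; rewrite (cardsD1 xm) Sxm => -[].
have [|z [w [Sz Sw Hzw]]] := IH (S :\ xm) cS'.
  move=> x y; rewrite !inE => /andP [_ xS] /andP [_ yS]; exact: H.
exists xm, w; split => //.
  by move: Sw; rewrite inE => /andP [].
move: Sz; rewrite !inE => /andP [zxm zS].
have := H xm z Sxm zS; rewrite eq_sym zxm => /(_ isT (Hmax z zS)).
move=> hM. rewrite mulSn. lia.
Qed.

Lemma pick_pair (d : T -> nat) (U : {set T}) P m : #|U| = m.+2 ->
  (forall z, z \in U -> d z <= P) ->
  exists x y, [/\ x \in U, y \in U, x != y, d y <= d x & m.+1 * (d x - d y) <= P].
Proof.
move=> cU dle.
case: (classic (exists x y, [/\ x \in U, y \in U, x != y, d y <= d x & m.+1 * (d x - d y) <= P])) => // Hn.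
exfalso.
pose M := P %/ m.+1.
have [|z [w [Uz Uw Hzw]]] := @gap d M m.+1 U cU.
  move=> x y xU yU xy dyx; rewrite ltnNge; apply/negP => Hle; apply: Hn.
  exists x, y; split => //.
  apply: leq_trans (leq_mul (leqnn m.+1) Hle) _.
  by rewrite mulnC leq_divM.
have := ltn_ceil P (ltn0Sn m); rewrite -/M => HP.
have := dle z Uz. rewrite mulnC in HP. lia.
Qed.

Lemma win (F : {set {set T}}) (P : {set T} -> Prop) (K : nat) :
  (forall U C : {set T}, #|U| <= 1 -> (forall z, z \in U -> z \notin C) -> Psi F U C <= K -> P C) ->
  forall m (U C : {set T}), #|U| = m -> (forall z, z \in U -> z \notin C) ->
  Psi F U C * m.+1 <= K -> waiter_wins P U C.
Proof.
move=> Hend m; elim/ltn_ind: m => m IH U C cU dis HK.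
case: m IH cU HK => [|[|m]] IH cU HK.
- have c1 : #|U| <= 1 by rewrite cU.
  apply: (ww_end c1); apply: (Hend _ _ c1 dis); lia.
- have c1 : #|U| <= 1 by rewrite cU.
  apply: (ww_end c1); apply: (Hend _ _ c1 dis); lia.
have [x [y [xU yU xy dyx Hgap]]] :=
  pick_pair cU (fun z _ => deg_le F U C z).
have cU' : #|U :\ x :\ y| = m.
  move: cU; rewrite (cardsD1 x) xU (cardsD1 y (U :\ x)) !inE eq_sym xy yU.
  by move=> [].
have swap : U :\ y :\ x = U :\ x :\ y.
  by apply/setP => z; rewrite !inE; case: (z == x); case: (z == y).
apply: (ww_step xU yU xy).
- apply: (IH m) => //.
  + move=> z; rewrite !inE => /andP [zy /andP [zx zU]].
    by rewrite negb_or zx dis.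
  + have := Psi_step F xU yU xy dis. nia.
- apply: (IH m) => //.
  + move=> z; rewrite !inE => /andP [zy /andP [zx zU]].
    by rewrite negb_or zy dis.
  + have := Psi_step F yU xU (negbT (introF eqP (fun e => (negP xy) (introT eqP (esym e))))) dis.
    rewrite swap => H.
    set a := Psi F (U :\ x :\ y) (y |: C) in H *.
    set b := Psi F U C in H HK Hgap *.
    set dx := deg F U C x in H dyx Hgap *.
    set dy := deg F U C y in H dyx Hgap *.
    have e : dx = dy + (dx - dy) by lia.
    set g := dx - dy in e Hgap.
    rewrite e in H.
    have H1 : 4 * a <= 4 * b + 2 * g by lia.
    have H2 := leq_mul H1 (leqnn m.+1).
    nia.
Qed.

Lemma om_lb (f U C : {set T}) : 2 ^ #|~: f| * 3 ^ #|f :\: (C :|: U)| <= om f U C.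
Proof.
have E : forall (A : {set T}) (c : nat),
  \prod_(i in A) c = \prod_(i : T) (if i \in A then c else 1).
  by move=> A c; rewrite big_mkcond.
rewrite -!prod_nat_const !E -big_split /=.
apply: leq_prod => z _; rewrite /hw !inE.
by case: (z \in f); case: (z \in C); case: (z \in U).
Qed.

Lemma card_lb (f U C : {set T}) : #|U| <= 1 ->
  #|f| <= #|f :\: (C :|: U)| + #|C :&: f| + 1.
Proof.
move=> c1.
rewrite cardsD setIUr.
have h1 := cardsU (f :&: C) (f :&: U).
have h2 : #|f :&: U| <= #|U| by apply: subset_leq_card; apply: subsetIr.
have h3 : #|f :&: (C :|: U)| <= #|f| by apply: subset_leq_card; apply: subsetIl.
rewrite setIUr in h3.
rewrite [C :&: f]setIC. lia.
Qed.

Lemma om_le_Psi (F : {set {set T}}) f U C : f \in F -> om f U C <= Psi F U C.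
Proof. by move=> fF; rewrite /Psi (bigD1 f) //= leq_addr. Qed.

End Game.

Section RealPart.
Local Unset Implicit Arguments.
Local Open Scope R_scope.


Lemma ln_le_sub1 x : 0 < x -> ln x <= x - 1.
Proof. move=> hx. have := exp_ineq1_le (ln x). rewrite exp_ln //. lra. Qed.

Lemma INR_expn (m k : nat) : INR (expn m k) = INR m ^ k.
Proof. elim: k => [|k IH] //=; by rewrite expnS mult_INR IH. Qed.

Lemma ln_le x y : 0 < x -> x <= y -> ln x <= ln y.
Proof.
move=> hx [hxy|->]; last by right.
by left; apply: ln_increasing.
Qed.

Lemma ln_div x y : 0 < x -> 0 < y -> ln (x / y) = ln x - ln y.
Proof.
move=> hx hy; rewrite /Rdiv ln_mult; [rewrite ln_Rinv; [ring|lra] | lra | apply: Rinv_0_lt_compat; lra].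
Qed.

Lemma pow_exp b k : 0 < b -> b ^ k = exp (INR k * ln b).
Proof. move=> hb. by rewrite -ln_pow // exp_ln //; apply: pow_lt. Qed.

Lemma real_bound (n k c Fc : nat) : (243 <= n)%nat ->
  INR Fc <= Rpower (INR n) (ln (INR n)) ->
  ln (INR n) ^ 3 <= INR k -> (100 * c < k)%nat ->
  (Fc * S n * 2 ^ k * 3 ^ S c < 3 ^ k)%nat.
Proof.
move=> hn hF hk hc.
apply/ltP; apply: INR_lt.
have i2 : INR 2 = 2 by rewrite INR_IZR_INZ.
have i3 : INR 3 = 3 by rewrite INR_IZR_INZ.
rewrite !mult_INR !INR_expn i2 i3 S_INR.
have hn0 : INR 243 <= INR n by apply: le_INR; apply/leP; lia.
have hn' : 243 <= INR n by move: hn0; rewrite INR_IZR_INZ.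

set L := ln (INR n) in hF hk *.
have l3ge : 1 <= ln 3.
  rewrite -[1]ln_exp; apply: ln_le; [apply: exp_pos | apply: exp_le_3].
have l3le : ln 3 <= 2 by have := ln_le_sub1 3; lra.
have l23 : ln 2 - ln 3 <= - (1/3).
  have := ln_le_sub1 (2/3). rewrite ln_div; lra.
have l2ge : 0 <= ln 2 by rewrite -ln_1; apply: ln_le; lra.
have Lge : 5 <= L.
  have : ln (3 ^ 5) <= L by apply: ln_le; [lra | simpl; lra].
  rewrite ln_pow; [simpl INR; lra | lra].
have hk' : INR (100 * c + 1) <= INR k by apply: le_INR; apply/leP; lia.
rewrite plus_INR mult_INR in hk'. simpl INR in hk'.
have Fle : INR Fc <= exp (L * L) by rewrite /Rpower in hF.
have e1 : 2 <= exp 1 by have := exp_ineq1_le 1; lra.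
have nle : INR n + 1 <= exp (L + 1).
  rewrite exp_plus /L exp_ln; [nra | lra].
have p2 : 2 ^ k = exp (INR k * ln 2) by apply: pow_exp; lra.
have p3 : 3 ^ k = exp (INR k * ln 3) by apply: pow_exp; lra.
have p3c : 3 * 3 ^ c = exp (INR (S c) * ln 3) := pow_exp 3 (S c) ltac:(lra).
have p3c' : 3 ^ (S c) = exp (INR (S c) * ln 3) := p3c.
rewrite p2 p3 ?p3c ?p3c'.
have key : L * L + (L + 1) + INR k * ln 2 + INR (S c) * ln 3 < INR k * ln 3.
  rewrite S_INR.
  have h1 : INR k * (ln 3 - ln 2) >= INR k * (1/3).
    apply: Rle_ge; apply: Rmult_le_compat_l; [apply: pos_INR | lra].
  have h2 : (INR c + 1) * ln 3 <= (INR c + 1) * 2.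
    apply: Rmult_le_compat_l; [have := pos_INR c; lra | lra].
  have h3 : L ^ 3 >= 5 * (L * L) by simpl; nra.
  nra.
have Fpos : 0 <= INR Fc by apply: pos_INR.
apply: Rle_lt_trans (_ : exp (L * L) * exp (L + 1) * exp (INR k * ln 2) * exp (INR (S c) * ln 3) < _).
  repeat apply: Rmult_le_compat; try lra; try (left; apply: exp_pos);
  try (apply: Rmult_le_pos); try (left; apply: exp_pos); try lra.
  all: try (have := pos_INR n; lra).
  all: try (apply: Rmult_le_pos; [lra | have := pos_INR n; lra]).
rewrite -!exp_plus; apply: exp_increasing; lra.
Qed.

End RealPart.

Theorem lemma6p1 :
  exists n0 : nat, forall n : nat, (n0 <= n)%nat ->
  forall F : {set {set 'I_n}},
    (INR #|F| <= Rpower (INR n) (ln (INR n)))%R ->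
    (forall f, f \in F -> (ln (INR n) ^ 3 <= INR #|f|)%R) ->
    waiter_strategy (fun C : {set 'I_n} =>
      forall f, f \in F -> (INR #|f| / 100 <= INR #|C :&: f|)%R).
Proof.
exists 243 => n hn F HF Hf.
rewrite /waiter_strategy.
have om0 : forall f, om f [set: 'I_n] set0 = 2 ^ n.
  move=> f; rewrite /om (eq_bigr (fun _ => 2)).
    by rewrite prod_nat_const cardT size_enum_ord.
  by move=> z _; rewrite /hw !inE; case: (z \in f).
apply: (@win _ F _ (#|F| * 2 ^ n * n.+1) _ n).
- move=> U C c1 dis hPsi f fF.
  apply: Rnot_lt_le => hlt.
  have i100 : INR 100 = 100%R by rewrite INR_IZR_INZ.
  have hc : (100 * #|C :&: f| < #|f|)%N.
    apply/ltP; apply: INR_lt; rewrite mult_INR i100; lra.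
  have hb := real_bound _ _ _ _ hn HF (Hf f fF) hc.
  have lb := om_lb f U C.
  have ub := om_le_Psi U C fF.
  have cl := card_lb f C c1.
  have cn : #|f| + #|~: f| = n by rewrite cardsC cardT size_enum_ord.
  set a := #|f :\: (C :|: U)| in lb cl.
  set c := #|C :&: f| in hc hb cl.
  set k := #|f| in hc hb cl cn.
  set b := #|~: f| in lb cn.
  have e1 : 3 ^ k <= 3 ^ a * 3 ^ c.+1.
    by rewrite -expnD leq_pexp2l //; lia.
  have e2 : 2 ^ b * 3 ^ a <= #|F| * 2 ^ n * n.+1 by lia.
  have e3 : 2 ^ b * 3 ^ k <= 2 ^ b * (#|F| * n.+1 * 2 ^ k * 3 ^ c.+1).
    have : 2 ^ b * 3 ^ k <= 2 ^ b * 3 ^ a * 3 ^ c.+1.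
      by rewrite -mulnA leq_mul2l e1 orbT.
    move=> h; apply: (leq_trans h).
    have e4 : 2 ^ n = 2 ^ k * 2 ^ b by rewrite -expnD cn.
    rewrite e4 in e2.
    have := leq_mul e2 (leqnn (3 ^ c.+1)).
    move: (2 ^ b) (3 ^ a) (3 ^ c.+1) (2 ^ k) => X Y Z W.
    move=> H; apply: leq_trans H _. nia.
  rewrite leq_pmul2l ?expn_gt0 // in e3.
  lia.
- by rewrite cardsT card_ord.
- by move=> z _; rewrite inE.
- rewrite /Psi (eq_bigr (fun _ => 2 ^ n)); last by move=> f _; apply: om0.
  by rewrite sum_nat_const.
Qed.
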